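(* Let $t_0\in\mathbb R$, $N\in\mathbb N^*$ and $G\in\mathcal A_N([t_0,\infty[)$. Then $$\sup_{t\ge t_0}\Big\{\Big|\int_{t_0}^t\cos(2s)G(s)\,ds\Big|,\ \Big|\int_{t_0}^t\sin(2s)G(s)\,ds\Big|\Big\}<\infty.$$
   Context: For $N\in\mathbb N^*$, $\mathcal A_N([t_0,\infty[)$ is the class of $C^N$ functions $G$ on $[t_0,\infty[$ such that $G^{(N)}\in L^1([t_0,\infty[)$ and $G^{(j)}(t)\to0$ as $t\to\infty$ for $0\le j\le N-1$. *)

(* Defs.v *)
From HB Require Import structures.
From mathcomp Require Import all_boot all_order all_algebra.
From mathcomp Require Import all_classical all_reals all_analysis.
Set Implicit Arguments. Unset Strict Implicit. Unset Printing Implicit Defensive.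
Import Order.TTheory GRing.Theory Num.Theory.
Import numFieldNormedType.Exports.
Local Open Scope classical_set_scope.
Local Open Scope ring_scope.

(* The class A_N([t0, oo[): G is C^N on [t0, oo[ (witnessed by the family of
   its successive derivatives g 0 = G, g 1 = G', ..., g N = G^(N), each
   continuous on the closed half-line and g (j+1) the derivative of g j at
   every interior point), G^(N) is Lebesgue integrable on [t0, oo[, and
   G^(j) t -> 0 as t -> +oo for 0 <= j <= N-1. *)
Definition class_A (R : realType) (N : nat) (t0 : R) (G : R -> R) : Prop :=
  exists g : nat -> R -> R,
    (forall t, t0 <= t -> g 0%N t = G t) /\
    (forall j, (j <= N)%N -> {within `[t0, +oo[, continuous (g j)}) /\
    (forall j, (j < N)%N -> forall t, t0 < t -> is_derive t 1 (g j) (g j.+1 t)) /\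
    (lebesgue_measure).-integrable `[t0, +oo[ (EFin \o g N) /\
    (forall j, (j < N)%N -> g j x @[x --> +oo] --> 0).

(* Main.v *)
Require Import Defs.
From HB Require Import structures.
From mathcomp Require Import all_boot all_order all_algebra.
From mathcomp Require Import all_classical all_reals all_analysis.
From mathcomp Require Import measurable_realfun.
From mathcomp Require Import ring lra.
Import Order.TTheory GRing.Theory Num.Theory.
Import numFieldNormedType.Exports.
Local Open Scope classical_set_scope.
Local Open Scope ring_scope.

Section S.
Context {R : realType}.
Notation mu := (@lebesgue_measure R).

Lemma withinM (A : set R) (f g : R -> R) :
  {within A, continuous f} -> {within A, continuous g} ->
  {within A, continuous (fun x => f x * g x)}.
Proof.
move=> cf cg x; exact: (continuousM (cf x) (cg x)).
Qed.

Lemma within_glob (A : set R) (f : R -> R) : continuous f -> {within A, continuous f}.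
Proof. move=> cf; exact: continuous_subspaceT. Qed.

Lemma bounded_cont (g : R -> R) t0 : {within `[t0, +oo[, continuous g} ->
  g x @[x --> +oo] --> 0 -> exists B, forall x, t0 <= x -> `|g x| <= B.
Proof.
move=> cg g0.
have : \forall x \near +oo, `|g x| < 1.
  by move/cvgr0_norm_lt : g0; apply.
case=> A [_ HA].
set c := Order.max A t0.
have ct : t0 <= c by rewrite le_max lexx orbT.
have cn : {within `[t0, c], continuous (fun x => `|g x|)}.
  move=> x; apply: continuous_comp; last exact: norm_continuous.
  by apply: (continuous_subspaceW _ cg) => y /=; rewrite !in_itv /= => /andP[->].
have [m mI Hm] := EVT_max ct cn.
exists (Order.max 1 `|g m|) => x x0.
have [xc|cx] := leP x c.
  by rewrite le_max Hm ?orbT // in_itv /= x0 xc.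
rewrite le_max (ltW (HA _ _)) //.
by apply: le_lt_trans cx; rewrite le_max lexx.
Qed.

Lemma Rint_pt (f : R -> R) a : \int[mu]_(x in `[a, a]) f x = 0.
Proof. by rewrite set_itv1 Rintegral_set1. Qed.

Lemma ibp (F f H h : R -> R) a b : a <= b ->
  {within `[a, +oo[, continuous F} -> {within `[a, +oo[, continuous f} ->
  (forall x : R, a < x -> is_derive x (1:R) F (f x)) ->
  (forall x : R, is_derive x (1:R) H (h x)) -> continuous h ->
  \int[mu]_(x in `[a, b]) (h x * F x) =
  F b * H b - F a * H a - \int[mu]_(x in `[a, b]) (H x * f x).
Proof.
rewrite le_eqVlt => /predU1P[<-|ab] cF cf dF dH ch.
  by rewrite !Rint_pt subrr subr0.
have sab : `[a, b] `<=` `[a, +oo[.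
  by move=> y /=; rewrite !in_itv /= => /andP[->].
have cH : continuous H.
  move=> x; apply: differentiable_continuous; rewrite -derivable1_diffP.
  by have [] := dH x.
under eq_Rintegral do rewrite mulrC.
rewrite (@Rintegration_by_parts R F H f h a b ab).
- by congr (_ - _); apply: eq_Rintegral => x _; rewrite mulrC.
- exact: continuous_subspaceW cf.
- have /(continuous_within_itvP _ ab) [_ ? ?] := continuous_subspaceW sab cF.
  split => // x; rewrite in_itv /= => /andP[ax _].
  by have [] := dF x ax.
- move=> x; rewrite in_itv /= => /andP[ax _].
  by rewrite derive1E; have [_ ->] := dF x ax.
- by apply: within_glob.
- have /(continuous_within_itvP _ ab) [_ ? ?] := @within_glob `[a, b] H cH.
  split => //.
  by move=> x _; rewrite derive1E; have [_ ->] := dH x.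
Qed.

Lemma bound_N (g h : R -> R) t0 t :
  mu.-integrable `[t0, +oo[ (EFin \o g) -> {within `[t0, +oo[, continuous g} ->
  continuous h -> (forall x, `|h x| <= 1) -> t0 <= t ->
  `|\int[mu]_(x in `[t0, t]) (h x * g x)| <=
    fine (\int[mu]_(x in `[t0, +oo[) (`|g x|%:E))%E.
Proof.
move=> ig cg ch h1 tt.
have sab : `[t0, t] `<=` `[t0, +oo[.
  by move=> y /=; rewrite !in_itv /= => /andP[->].
have cI : {within `[t0, t], continuous (fun x => h x * g x)}.
  by apply: withinM; [exact: within_glob | exact: continuous_subspaceW cg].
have ihg := continuous_compact_integrable (@segment_compact _ t0 t) cI.
apply: le_trans (le_normr_Rintegral _ ihg) _ => //.
have mg : measurable_fun `[t0, +oo[ g.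
  by case/integrableP: ig => /measurable_EFinP.
have mhg : measurable_fun `[t0, t] (fun x => h x * g x).
  by case/integrableP: ihg => /measurable_EFinP.
rewrite /Rintegral fine_le //.
- case/integrableP: ihg => _ HH.
  by rewrite ge0_fin_numE ?integral_ge0 //= => x _; rewrite lee_fin.
- case/integrableP: ig => _ HH.
  by rewrite ge0_fin_numE ?integral_ge0 //= => x _; rewrite lee_fin.
apply: (@le_trans _ _ (\int[mu]_(x in `[t0, t]) (`|g x|)%:E)%E).
  apply: ge0_le_integral => //.
  - by apply/measurable_EFinP; apply: measurableT_comp.
  - apply/measurable_EFinP; apply: measurableT_comp => //.
    exact: measurable_funS mg.
  - by move=> x _; rewrite lee_fin normrM ler_piMl.
apply: ge0_subset_integral => //.
apply/measurable_EFinP; exact: measurableT_comp.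
Qed.

Lemma cont2 (f : R -> R) : continuous f -> continuous (fun x : R => f (2 * x)).
Proof.
move=> cf x; apply: (@continuous_comp _ _ _ (fun y : R => 2 * y) f); last exact: cf.
by apply: continuousM; [exact: cst_continuous | exact: (fun z => cvg_id)].
Qed.

Lemma der1 (x : R) : is_derive x (1:R) (fun x => sin (2 * x) / 2) (cos (2 * x)).
Proof.
have -> : (fun x : R => sin (2 * x) / 2) = (@sin R * @cos R)%R.
  apply/funext => y /=; have -> : 2 * y = y + y by rewrite mulr2n mulrDl mul1r.
  rewrite sinD; change ((sin y * cos y + cos y * sin y) / 2 = sin y * cos y); by field.
apply: trigger_derive.
have -> : 2 * x = x + x by rewrite mulr2n mulrDl mul1r.
by rewrite cosD /GRing.scale /=; lra.
Qed.

Lemma der2 (x : R) : is_derive x (1:R) (fun x => - cos (2 * x) / 2) (sin (2 * x)).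
Proof.
have -> : (fun x : R => - cos (2 * x) / 2) = (2^-1 \*: (@sin R * @sin R - @cos R * @cos R))%R.
  apply/funext => y /=; have -> : 2 * y = y + y by rewrite mulr2n mulrDl mul1r.
  rewrite cosD; change (- (cos y * cos y - sin y * sin y) / 2 = 2^-1 * (sin y * sin y - cos y * cos y)); by field.
apply: trigger_derive.
have -> : 2 * x = x + x by rewrite mulr2n mulrDl mul1r.
by rewrite sinD /GRing.scale /=; lra.
Qed.

Lemma H1le (x : R) : `|sin (2 * x) / 2| <= 1.
Proof.
rewrite normrM (@ger0_norm _ 2^-1) ?invr_ge0 //; have := sin_max (2 * x); lra.
Qed.

Lemma H2le (x : R) : `|- cos (2 * x) / 2| <= 1.
Proof.
rewrite normrM normrN (@ger0_norm _ 2^-1) ?invr_ge0 //; have := cos_max (2 * x); lra.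
Qed.

Lemma int_seg (h g : R -> R) t0 t : continuous h -> {within `[t0, +oo[, continuous g} ->
  mu.-integrable `[t0, t] (EFin \o (fun x => h x * g x)).
Proof.
move=> ch cg; apply: continuous_compact_integrable; first exact: segment_compact.
apply: withinM; first exact: within_glob.
by apply: (continuous_subspaceW _ cg) => y /=; rewrite !in_itv /= => /andP[->].
Qed.

Lemma step (F f w H w' : R -> R) (c t0 B M : R) :
  {within `[t0, +oo[, continuous F} -> {within `[t0, +oo[, continuous f} ->
  (forall x : R, t0 < x -> is_derive x (1:R) F (f x)) ->
  (forall x, t0 <= x -> `|F x| <= B) ->
  (forall x : R, is_derive x (1:R) H (w x)) -> continuous w -> continuous w' ->
  (forall x, H x = c * w' x) -> (forall x, `|H x| <= 1) -> `|c| <= 1 ->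
  (forall t, t0 <= t -> `|\int[mu]_(x in `[t0, t]) (w' x * f x)| <= M) ->
  forall t, t0 <= t -> `|\int[mu]_(x in `[t0, t]) (w x * F x)| <= B + B + M.
Proof.
move=> cF cf dF FB dH cw cw' Hc H1 c1 IH t tt.
rewrite (@ibp F f H w t0 t tt cF cf dF dH cw).
under eq_Rintegral do rewrite Hc -mulrA.
rewrite RintegralZl //; last exact: int_seg.
have M0 : 0 <= M by apply: le_trans (IH t0 (lexx _)).
have a1 : `|F t * H t| <= B.
  rewrite normrM; have := FB t tt; have := H1 t; have := normr_ge0 (H t);
  have := normr_ge0 (F t); nra.
have a2 : `|F t0 * H t0| <= B.
  rewrite normrM; have := FB t0 (lexx _); have := H1 t0; have := normr_ge0 (H t0);
  have := normr_ge0 (F t0); nra.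
have a3 : `|c * \int[mu]_(x in `[t0, t]) (w' x * f x)| <= M.
  rewrite normrM; have := IH t tt; have := normr_ge0 c;
  have := normr_ge0 (\int[mu]_(x in `[t0, t]) (w' x * f x)); nra.
set a := F t * H t; set b := F t0 * H t0; set d := c * _.
have := ler_normB (a - b) d; have := ler_normB a b; lra.
Qed.

Lemma key (N : nat) (t0 : R) (g : nat -> R -> R) :
  (forall j, (j <= N)%N -> {within `[t0, +oo[, continuous (g j)}) ->
  (forall j, (j < N)%N -> forall t : R, t0 < t -> is_derive t (1:R) (g j) (g j.+1 t)) ->
  mu.-integrable `[t0, +oo[ (EFin \o g N) ->
  (forall j, (j < N)%N -> g j x @[x --> +oo] --> 0) ->
  forall i, (i <= N)%N -> exists M : R, forall t, t0 <= t ->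
    `|\int[mu]_(x in `[t0, t]) (cos (2 * x) * g (N - i)%N x)| <= M /\
    `|\int[mu]_(x in `[t0, t]) (sin (2 * x) * g (N - i)%N x)| <= M.
Proof.
move=> cg dg ig lg; elim=> [_|i IH hi].
  rewrite subn0; exists (fine (\int[mu]_(x in `[t0, +oo[) (`|g N x|%:E))%E).
  move=> t tt; split.
  - apply: (@bound_N (g N) (fun x : R => cos (2 * x))) => //; first exact: cg.
    + exact: (@cont2 (@cos R) (@continuous_cos R)).
    + by move=> x; exact: cos_max.
  - apply: (@bound_N (g N) (fun x : R => sin (2 * x))) => //; first exact: cg.
    + exact: (@cont2 (@sin R) (@continuous_sin R)).
    + by move=> x; exact: sin_max.
have [M HM] := IH (ltnW hi).
have ek : (N - i = (N - i.+1).+1)%N by rewrite subnSK.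
rewrite ek in HM.
set k := (N - i.+1)%N in HM *.
have kN : (k < N)%N by rewrite /k ltn_subrL; case: N hi {ek k HM IH cg dg ig lg}.
have [B HB] := @bounded_cont (g k) t0 (cg k (ltnW kN)) (lg k kN).
have c1 : `|(2:R)^-1| <= 1.
  rewrite ger0_norm ?invr_ge0 // invf_le1 //; lra.
exists (B + B + M) => t tt; split.
- apply: (@step (g k) (g k.+1) (fun x => cos (2 * x)) (fun x => sin (2 * x) / 2)
     (fun x => sin (2 * x)) 2^-1) => //.
  + by apply: cg; exact: ltnW.
  + by apply: cg.
  + exact: dg.
  + exact: der1.
  + exact: (@cont2 (@cos R) (@continuous_cos R)).
  + exact: (@cont2 (@sin R) (@continuous_sin R)).
  + by move=> x; rewrite mulrC.
  + exact: H1le.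
  + by move=> s ss; case: (HM s ss).
- apply: (@step (g k) (g k.+1) (fun x => sin (2 * x)) (fun x => - cos (2 * x) / 2)
     (fun x => cos (2 * x)) (- 2^-1)) => //.
  + by apply: cg; exact: ltnW.
  + by apply: cg.
  + exact: dg.
  + exact: der2.
  + exact: (@cont2 (@sin R) (@continuous_sin R)).
  + exact: (@cont2 (@cos R) (@continuous_cos R)).
  + by move=> x; rewrite !mulNr mulrC.
  + exact: H2le.
  + by rewrite normrN.
  + by move=> s ss; case: (HM s ss).
Qed.

End S.

Theorem lemma4p3 (R : realType) (t0 : R) (N : nat) (G : R -> R) :
  (0 < N)%N -> class_A N t0 G ->
  exists M : R, forall t : R, t0 <= t ->
    `| Rintegral lebesgue_measure `[t0, t] (fun s => cos (2 * s) * G s) | <= M /\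
    `| Rintegral lebesgue_measure `[t0, t] (fun s => sin (2 * s) * G s) | <= M.
Proof.
move=> _ [g [g0 [cg [dg [ig lg]]]]].
have [M HM] := @key R N t0 g cg dg ig lg N (leqnn N).
rewrite subnn in HM.
exists M => t tt.
have E : forall h : R -> R, Rintegral lebesgue_measure `[t0, t] (fun s => h s * G s) =
    Rintegral lebesgue_measure `[t0, t] (fun s => h s * g 0%N s).
  move=> h; apply: eq_Rintegral => x; rewrite inE /= in_itv /= => /andP[x0 _].
  by rewrite g0.
by rewrite !E; exact: HM.
Qed.
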